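(* Fix a master index $m\in\{1,\dots,N\}$, write $\omega=\omega_m$, $\phi=\phi_m$, $\alpha=m$, $\beta=m+N$, and assume $4\omega^2\neq\omega_r^2$ for all $r\in\{1,\dots,N\}$. Define $$\Psi^{(P)}=\big[4\omega^2\mathbf{M}-\mathbf{K}\big]^{-1}\mathbf{G}(\phi,\phi),\qquad \Psi^{(N)}=-\mathbf{K}^{-1}\mathbf{G}(\phi,\phi),$$ $\Psi^{(2)}_{\alpha\alpha}=\Psi^{(2)}_{\beta\beta}=\Psi^{(P)}$, $\Psi^{(2)}_{\alpha\beta}=\Psi^{(2)}_{\beta\alpha}=\Psi^{(N)}$, and for $k,l,p\in\{\alpha,\beta\}$ $$\Xi_{klp}=\mathbf{G}(\Psi^{(2)}_{kl},\phi)+\mathbf{G}(\phi,\Psi^{(2)}_{lp})+\mathbf{H}(\phi,\phi,\phi),\qquad f_{\alpha klp}=-\frac{\phi^{T}\Xi_{klp}}{2i\omega},\qquad f_{\beta klp}=-f_{\alpha klp}.$$ Let $z_\alpha(t),z_\beta(t)$ be differentiable (complex-valued) functions satisfying the reduced dynamics $$\dot z_\alpha=i\omega z_\alpha+\sum_{k,l,p\in\{\alpha,\beta\}}f_{\alpha klp}z_kz_lz_p,\qquad \dot z_\beta=-i\omega z_\beta+\sum_{k,l,p\in\{\alpha,\beta\}}f_{\beta klp}z_kz_lz_p,$$ and set $r=z_\alpha+z_\beta$, $s=i\omega(z_\alpha-z_\beta)$. Then $\dot r=s$ and $$\dot s=-\omega^2r-(h+A)\,r^3-B\,r\,s^2,$$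 so that $\ddot r+\omega^2 r+(h+A)r^3+B\,r\,\dot r^2=0$, where $$h=\phi^{T}\mathbf{H}(\phi,\phi,\phi),\quad A=2\,\phi^{T}\mathbf{G}(\hat{\mathbf a},\phi),\quad B=2\,\phi^{T}\mathbf{G}(\hat{\mathbf b},\phi),\quad \hat{\mathbf a}=\tfrac12\big(\Psi^{(N)}+\Psi^{(P)}\big),\quad \hat{\mathbf b}=\frac{1}{2\omega^2}\big(\Psi^{(N)}-\Psi^{(P)}\big).$$
   Context: Let $N\ge1$, let $\mathbf{M},\mathbf{K}\in\mathbb{R}^{N\times N}$ be symmetric positive definite, let $\mathbf{G}:\mathbb{R}^N\times\mathbb{R}^N\to\mathbb{R}^N$ be a symmetric bilinear map and $\mathbf{H}:(\mathbb{R}^N)^3\to\mathbb{R}^N$ a symmetric trilinear map, both extended complex-multilinearly to $\mathbb{C}^N$. Let $\phi_1,\dots,\phi_N\in\mathbb{R}^N$ and $\omega_1,\dots,\omega_N>0$ satisfy $\mathbf{K}\phi_s=\omega_s^2\mathbf{M}\phi_s$ and $\phi_s^{T}\mathbf{M}\phi_t=\delta_{st}$ (mass-normalised linear vibration modes). *)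

(* Defs.v *)
From Stdlib Require Import Reals.
From Coquelicot Require Import Coquelicot.
From mathcomp Require Import all_boot all_algebra.
From mathcomp Require Import Rstruct.
Set Implicit Arguments. Unset Strict Implicit. Unset Printing Implicit Defensive.
Import GRing.Theory Num.Theory.
Local Open Scope ring_scope.

Definition vdot (N : nat) (x y : 'cV[R]_N) : R := (x^T *m y) 0 0.

Definition spd (N : nat) (A : 'M[R]_N) : Prop :=
  A^T = A /\ forall x : 'cV[R]_N, x != 0 -> 0 < vdot x (A *m x).

Definition sym_bilinear (N : nat) (G : 'cV[R]_N -> 'cV[R]_N -> 'cV[R]_N) : Prop :=
  (forall x y, G x y = G y x) /\
  (forall (a : R) x y z, G (a *: x + y) z = a *: G x z + G y z).

Definition sym_trilinear (N : nat)
    (H : 'cV[R]_N -> 'cV[R]_N -> 'cV[R]_N -> 'cV[R]_N) : Prop :=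
  (forall x y z, H x y z = H y x z) /\ (forall x y z, H x y z = H x z y) /\
  (forall (a : R) x y z w, H (a *: x + y) z w = a *: H x z w + H y z w).

Definition PsiP (N : nat) (M K : 'M[R]_N) (G : 'cV[R]_N -> 'cV[R]_N -> 'cV[R]_N)
    (w : R) (phi : 'cV[R]_N) : 'cV[R]_N :=
  invmx (4 * w ^+ 2 *: M - K) *m G phi phi.

Definition PsiN (N : nat) (K : 'M[R]_N) (G : 'cV[R]_N -> 'cV[R]_N -> 'cV[R]_N)
    (phi : 'cV[R]_N) : 'cV[R]_N :=
  - (invmx K *m G phi phi).

(* Indices alpha, beta are encoded by bool: true = alpha (= m), false = beta (= m+N). *)
Definition Psi2 (N : nat) (M K : 'M[R]_N) G (w : R) (phi : 'cV[R]_N)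
    (k l : bool) : 'cV[R]_N :=
  if k == l then PsiP M K G w phi else PsiN K G phi.

Definition Xi (N : nat) (M K : 'M[R]_N) G H (w : R) (phi : 'cV[R]_N)
    (k l p : bool) : 'cV[R]_N :=
  G (Psi2 M K G w phi k l) phi + G phi (Psi2 M K G w phi l p) + H phi phi phi.

Definition f_alpha (N : nat) (M K : 'M[R]_N) G H (w : R) (phi : 'cV[R]_N)
    (k l p : bool) : C :=
  Copp (Cdiv (RtoC (vdot phi (Xi M K G H w phi k l p)))
             (Cmult (RtoC 2%:R) (Cmult Ci (RtoC w)))).

Definition f_beta (N : nat) (M K : 'M[R]_N) G H (w : R) (phi : 'cV[R]_N)
    (k l p : bool) : C :=
  Copp (f_alpha M K G H w phi k l p).

Definition sumb (F : bool -> C) : C := Cplus (F true) (F false).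

Definition cubic_sum (c : bool -> bool -> bool -> C) (z : bool -> C) : C :=
  sumb (fun k => sumb (fun l => sumb (fun p =>
    Cmult (c k l p) (Cmult (z k) (Cmult (z l) (z p)))))).

(* Main.v *)
Require Import Defs.
From Stdlib Require Import Reals Lra.
From Coquelicot Require Import Coquelicot.
From mathcomp Require Import all_boot all_algebra.
From mathcomp Require Import Rstruct.
Import GRing.Theory Num.Theory.

Open Scope R_scope.
Ltac ceq := apply injective_projections; unfold Cminus, Cdiv, Cinv, Cmult, Cplus, Copp, RtoC, Ci; simpl; unfold plus, scal, mult, opp; simpl; unfold plus, scal, mult, opp; simpl.

Lemma is_derive_Cmult_l (f : R -> C) t (l c : C) :
  is_derive f t l -> is_derive (fun x => Cmult c (f x)) t (Cmult c l).
Proof.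
  intro Hf. unfold is_derive in *.
  assert (Hlin : is_linear (fun x : C_R_NormedModule => Cmult c x)).
  { split.
    - intros x y; ceq; ring.
    - intros k x; ceq; ring.
    - exists (Cmod c + 1). split. pose proof (Cmod_ge_0 c); lra.
      intros x. rewrite <- !Cmod_norm, Cmod_mult.
      pose proof (Cmod_ge_0 c); pose proof (Cmod_ge_0 x); nra. }
  apply filterdiff_ext_lin with (fun y : R_AbsRing => Cmult c (scal y l)).
  apply (filterdiff_comp' f (fun x : C_R_NormedModule => Cmult c x)). exact Hf. apply filterdiff_linear; exact Hlin.
  intros y; simpl. ceq; ring.
Qed.

Lemma fa_val (X w : R) : w <> 0 ->
  Copp (Cdiv (RtoC X) (Cmult (RtoC (Rplus R1 R1)) (Cmult Ci (RtoC w)))) = (0, X/(2*w)).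
Proof. intro hw. ceq; field; auto. Qed.

Lemma key (z : bool -> C) (w P Nn h A B : R) (f : bool->bool->bool->C) :
 w <> 0 -> A = P + Nn -> Nn = P + B*(w*w) ->
 (forall k l p, f k l p = (0, ((if k==l then P else Nn) + (if l==p then P else Nn) + h)/(2*w))) ->
 let r := Cplus (z true) (z false) in
 let s := Cmult (Cmult Ci (RtoC w)) (Cminus (z true) (z false)) in
 Cmult (Cmult Ci (RtoC w)) (Cminus (Cplus (Cmult (Cmult Ci (RtoC w)) (z true)) (cubic_sum f z))
     (Cplus (Cmult (Copp (Cmult Ci (RtoC w))) (z false)) (cubic_sum (fun k l p => Copp (f k l p)) z)))
 = Cminus (Cminus (Copp (Cmult (RtoC (w*w)) r)) (Cmult (RtoC (h + A)) (Cmult r (Cmult r r))))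
     (Cmult (RtoC B) (Cmult r (Cmult s s))).
Proof.
  intros hw hA hN hf r s. subst r s. subst A Nn.
  unfold cubic_sum, sumb. rewrite !hf. simpl.
  destruct (z true) as [a1 a2]; destruct (z false) as [b1 b2].
  ceq; field; auto.
Qed.


Lemma keyr (z : bool -> C) (w : R) (f : bool->bool->bool->C) :
  Cplus (Cplus (Cmult (Cmult Ci (RtoC w)) (z true)) (cubic_sum f z))
    (Cplus (Cmult (Copp (Cmult Ci (RtoC w))) (z false)) (cubic_sum (fun k l p => Copp (f k l p)) z))
  = Cmult (Cmult Ci (RtoC w)) (Cminus (z true) (z false)).
Proof.
  unfold cubic_sum, sumb.
  destruct (z true) as [a1 a2]; destruct (z false) as [b1 b2].
  ceq; ring.
Qed.

Lemma is_derive_eq (f g : R -> C) t (l l' : C) :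
  (forall x, f x = g x) -> l = l' -> is_derive f t l -> is_derive g t l'.
Proof. intros e1 e2 hd; subst l'. eapply is_derive_ext; eauto. Qed.

From mathcomp Require Import ring lra.
Section MC.
Local Open Scope ring_scope.
Lemma two_eq : (2%:R : R) = Rplus R1 R1.
Proof. by rewrite mulr2n. Qed.
Lemma neq (w : R) : (0 < w) -> w <> 0.
Proof. move=> hw h; move: (lt0r_neq0 hw); by rewrite h eqxx. Qed.
Lemma fA (P Nn : R) : 2 * (2^-1 * (Nn + P)) = P + Nn.
Proof. by field. Qed.
Lemma fB (P Nn B w: R) : w != 0 -> B = 2 * ((2 * w^+2)^-1 * (Nn - P)) -> Nn = P + B * (w * w).
Proof. move=> hw ->. field. exact hw. Qed.
Lemma vdotD N (x u v : 'cV[R]_N) : vdot x (u + v) = vdot x u + vdot x v.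
Proof. by rewrite /vdot mulmxDr mxE. Qed.
Lemma vdotB N (x u v : 'cV[R]_N) : vdot x (u - v) = vdot x u - vdot x v.
Proof. by rewrite /vdot mulmxBr !mxE. Qed.
Lemma vdotZ N (x u : 'cV[R]_N) a : vdot x (a *: u) = a * vdot x u.
Proof. by rewrite /vdot -scalemxAr mxE. Qed.
End MC.

Local Open Scope ring_scope.

Theorem mainTheorem6 (N : nat) (M K : 'M[R]_N)
  (G : 'cV[R]_N -> 'cV[R]_N -> 'cV[R]_N)
  (H : 'cV[R]_N -> 'cV[R]_N -> 'cV[R]_N -> 'cV[R]_N)
  (phi : 'I_N -> 'cV[R]_N) (omega : 'I_N -> R)
  (hM : spd M) (hK : spd K) (hG : sym_bilinear G) (hH : sym_trilinear H)
  (homega : forall s, 0 < omega s)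
  (heig : forall s, K *m phi s = omega s ^+ 2 *: (M *m phi s))
  (hnorm : forall s t, vdot (phi s) (M *m phi t) = (s == t)%:R)
  (m : 'I_N)
  (hnonres : forall r : 'I_N, 4 * omega m ^+ 2 != omega r ^+ 2)
  (z : bool -> R -> C) (z' : bool -> R -> C)
  (hza : forall t, is_derive (z true) t (z' true t))
  (hzb : forall t, is_derive (z false) t (z' false t))
  (hdyn_a : forall t, z' true t =
     Cplus (Cmult (Cmult Ci (RtoC (omega m))) (z true t))
           (cubic_sum (f_alpha M K G H (omega m) (phi m)) (fun k => z k t)))
  (hdyn_b : forall t, z' false t =
     Cplus (Cmult (Copp (Cmult Ci (RtoC (omega m)))) (z false t))
           (cubic_sum (f_beta M K G H (omega m) (phi m)) (fun k => z k t))) :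
  let w := omega m in
  let ph := phi m in
  let h := vdot ph (H ph ph ph) in
  let ahat := 2^-1 *: (PsiN K G ph + PsiP M K G w ph) in
  let bhat := (2 * w ^+ 2)^-1 *: (PsiN K G ph - PsiP M K G w ph) in
  let A := 2 * vdot ph (G ahat ph) in
  let B := 2 * vdot ph (G bhat ph) in
  let r := fun t => Cplus (z true t) (z false t) in
  let s := fun t => Cmult (Cmult Ci (RtoC w)) (Cminus (z true t) (z false t)) in
  forall t,
    is_derive r t (s t) /\
    is_derive s t
      (Cminus (Cminus (Copp (Cmult (RtoC (w ^+ 2)) (r t)))
                      (Cmult (RtoC (h + A)) (Cmult (r t) (Cmult (r t) (r t)))))
              (Cmult (RtoC B) (Cmult (r t) (Cmult (s t) (s t))))).
Proof.
  intros w ph h ahat bhat A B r s t.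
  have hw0 : w != 0 := lt0r_neq0 (homega m).
  have hw : w <> 0%R := neq _ (homega m).
  destruct hG as [hGs hGl].
  have hG0 : forall u, G 0 u = 0.
  { move=> u. have e := hGl 1 0 0 u. rewrite !scale1r addr0 in e.
    by rewrite -[LHS](addrK (G 0 u)) -e subrr. }
  have hGD : forall x y u, G (x + y) u = G x u + G y u.
  { move=> x y u. by have := hGl 1 x y u; rewrite !scale1r. }
  have hGZ : forall (a : R) x u, G (a *: x) u = a *: G x u.
  { move=> a x u. by rewrite -[a *: x]addr0 hGl hG0 addr0. }
  have hGB : forall x y u, G (x - y) u = G x u - G y u.
  { move=> x y u. by rewrite addrC -scaleN1r hGl scaleN1r addrC. }
  set P := vdot ph (G (PsiP M K G w ph) ph).
  set Nn := vdot ph (G (PsiN K G ph) ph).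
  have hX : forall k l p, vdot ph (Xi M K G H w ph k l p) =
     ((if k == l then P else Nn) + (if l == p then P else Nn) + h).
  { move=> k l p. rewrite /Xi !vdotD (hGs ph).
    case: k; case: l; case: p; reflexivity. }
  have hA : A = P + Nn.
  { rewrite /A /ahat hGZ vdotZ hGD vdotD. exact: fA. }
  have hN : Nn = (P + B * (w * w))%R.
  { apply: (fB _ _ _ _ hw0). by rewrite /B /bhat hGZ vdotZ hGB vdotB. }
  have hf : forall k l p, f_alpha M K G H w ph k l p =
     (0%R, (((if k == l then P else Nn) + (if l == p then P else Nn) + h)/(2*w))%R).
  { move=> k l p. rewrite /f_alpha two_eq hX. exact: fa_val. }
  split.
  - have hd := is_derive_plus (z true) (z false) t _ _ (hza t) (hzb t).
    eapply is_derive_eq; [ | | exact hd]; [ reflexivity | ].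
    rewrite hdyn_a hdyn_b. exact: keyr.
  - have hd := is_derive_Cmult_l _ _ _ (Cmult Ci (RtoC w))
      (is_derive_minus _ _ _ _ _ (hza t) (hzb t)).
    eapply is_derive_eq; [ | | exact hd]; [ reflexivity | ].
    rewrite hdyn_a hdyn_b. exact: (key _ _ _ _ _ _ _ _ hw hA hN hf).
Qed.
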